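(* Let $0<\epsilon<1$ and let $X^\epsilon$ be the solution of the initial value problem described in the context. Then there is a constant $C>0$ such that for every $\epsilon\in(0,1)$ and every $t\geq 0$, $$\int_{-\pi}^{+\pi}|X^\epsilon(x,t)|\,dx\leq \int_{-\pi}^{+\pi}|v_0^\epsilon(x)|\,dx\leq C.$$
   Context: Let $\mathcal{C}_b(\mathbb{R})$ denote the Banach space of bounded continuous real functions on $\mathbb{R}$ with the sup norm. For a real function $u$ set $u^+=\max(0,u)$, $u^-=\max(0,-u)$, so $u=u^+-u^-$, $|u|=u^++u^-$. For $0<\epsilon<1$ let $u^\epsilon:\mathbb{R}\times[0,\infty)\to\mathbb{R}$ be $2\pi$-periodic in $x$, with $t\mapsto u^\epsilon(\cdot,t)$ continuous from $[0,\infty)$ into $\mathcal{C}_b(\mathbb{R})$, and assume there is $M_1>0$ with $|u^\epsilon(x,t)|\leq M_1$ for all $\epsilon$, $x$, $t\geq0$. Let $v_0^\epsilon\in\mathcal{C}_b(\mathbb{R})$ be $2\pi$-periodic with $\sup_{\epsilon}\int_{-\pi}^{\pi}|v_0^\epsilon(x)|dx<\infty$. Let $X^\epsilon$ be the unique global $\mathcal{C}^1$ solution $t\mapsto X^\epsilon(\cdot,t)\in\mathcal{C}_b(\mathbb{R})$ of the linear ODE $$\frac{d}{dt}X^\epsilon(x,t)=\frac{1}{\epsilon}\big[X^\epsilon(x-\epsilon,t)u^{\epsilon+}(x-\epsilon,t)-X^\epsilon(x,t)|u^{\epsilon}(x,t)|+X^\epsilon(x+\epsilon,t)u^{\epsilon-}(x+\epsilon,t)\big],\quad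 X^\epsilon(x,0)=v_0^\epsilon(x).$$ *)

(* Defs.v *)
From Stdlib Require Import Reals.
From Coquelicot Require Import Coquelicot.
Open Scope R_scope.

Definition pospart (a : R) : R := Rmax 0 a.
Definition negpart (a : R) : R := Rmax 0 (- a).

Definition periodic2pi (f : R -> R) : Prop := forall x, f (x + 2 * PI) = f x.

Definition in_Cb (f : R -> R) : Prop :=
  (forall x, continuous f x) /\ exists B, forall x, Rabs (f x) <= B.

Definition sup_continuous (F : R -> R -> R) : Prop :=
  forall t, 0 <= t -> forall d, 0 < d -> exists eta, 0 < eta /\
    forall s, 0 <= s -> Rabs (s - t) < eta ->
      forall x, Rabs (F x s - F x t) <= d.

Definition rhs (eps : R) (u X : R -> R -> R) (x t : R) : R :=
  / eps * (X (x - eps) t * pospart (u (x - eps) t)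
           - X x t * Rabs (u x t)
           + X (x + eps) t * negpart (u (x + eps) t)).

Definition sup_derivative (X D : R -> R -> R) : Prop :=
  forall t, 0 <= t -> forall d, 0 < d -> exists eta, 0 < eta /\
    forall h, h <> 0 -> Rabs h < eta -> 0 <= t + h ->
      forall x, Rabs ((X x (t + h) - X x t) / h - D x t) <= d.

Definition is_C1_solution (eps : R) (u : R -> R -> R) (v0 : R -> R)
  (X : R -> R -> R) : Prop :=
  (forall t, 0 <= t -> in_Cb (fun x => X x t)) /\
  sup_derivative X (rhs eps u X) /\
  sup_continuous (rhs eps u X) /\
  (forall x, X x 0 = v0 x).

(* Main.v *)
Require Import Defs.
From Stdlib Require Import Reals Lra Classical.
From Coquelicot Require Import Coquelicot.
Open Scope R_scope.

Lemma cplus (f g : R -> R) x : continuous f x -> continuous g x -> continuous (fun y => f y + g y) x.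
Proof. intros. apply (continuous_plus f g); auto. Qed.
Lemma cmult (f g : R -> R) x : continuous f x -> continuous g x -> continuous (fun y => f y * g y) x.
Proof. intros. apply (continuous_mult f g); auto. Qed.
Lemma cconst (c x : R) : continuous (fun _ : R => c) x.
Proof. apply continuous_const. Qed.
Lemma copp (f : R -> R) x : continuous f x -> continuous (fun y => - f y) x.
Proof. intros. apply (continuous_opp f); auto. Qed.
Lemma cminus (f g : R -> R) x : continuous f x -> continuous g x -> continuous (fun y => f y - g y) x.
Proof. intros. apply (cplus f (fun y => - g y)); auto. apply copp; auto. Qed.
Lemma cabs (f : R -> R) x : continuous f x -> continuous (fun y => Rabs (f y)) x.
Proof. intros. apply continuous_Rabs_comp; auto. Qed.
Lemma cshift (f : R -> R) a x : continuous f (x + a) -> continuous (fun y => f (y + a)) x.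
Proof. intros. apply (continuous_comp (fun y => y + a) f); auto.
 apply cplus. apply continuous_id. apply cconst. Qed.
Lemma pospart_eq a : pospart a = (a + Rabs a) / 2.
Proof. unfold pospart, Rmax, Rabs. destruct (Rle_dec 0 a); destruct (Rcase_abs a); lra. Qed.
Lemma negpart_eq a : negpart a = (Rabs a - a) / 2.
Proof. unfold negpart, Rmax, Rabs. destruct (Rle_dec 0 (-a)); destruct (Rcase_abs a); lra. Qed.
Lemma cpos (f : R -> R) x : continuous f x -> continuous (fun y => pospart (f y)) x.
Proof. intros. apply (continuous_ext (fun y => (f y + Rabs (f y)) * /2)).
 intros; rewrite pospart_eq; reflexivity.
 apply cmult. apply cplus; auto. apply cabs; auto. apply cconst. Qed.
Lemma cneg (f : R -> R) x : continuous f x -> continuous (fun y => negpart (f y)) x.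
Proof. intros. apply (continuous_ext (fun y => (Rabs (f y) - f y) * /2)).
 intros; rewrite negpart_eq; reflexivity.
 apply cmult. apply cminus; auto. apply cabs; auto. apply cconst. Qed.

Lemma exR (f : R -> R) a b : (forall x, continuous f x) -> ex_RInt f a b.
Proof. intros. apply (ex_RInt_continuous (V := R_CompleteNormedModule)); auto. Qed.

Lemma shift_inv (g : R -> R) a : (forall x, continuous g x) -> periodic2pi g ->
  RInt (fun x => g (x + a)) (- PI) PI = RInt g (- PI) PI.
Proof.
  intros Hc Hp.
  assert (E1 := RInt_comp_lin g 1 a (-PI) PI (exR _ _ _ Hc)).
  assert (E2 := RInt_comp_lin g 1 (2*PI) (-PI + a) (-PI) (exR _ _ _ Hc)).
  assert (C1 := RInt_Chasles g (-PI + a) (-PI) (PI + a) (exR _ _ _ Hc) (exR _ _ _ Hc)).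
  assert (C2 := RInt_Chasles g (-PI) PI (PI + a) (exR _ _ _ Hc) (exR _ _ _ Hc)).
  assert (S := opp_RInt_swap g PI (PI + a) (exR _ _ _ Hc)).
  assert (F1 : RInt (fun x => g (x + a)) (- PI) PI = RInt g (-PI + a) (PI + a)).
  { replace (-PI + a) with (1 * -PI + a) by ring. replace (PI+a) with (1*PI+a) by ring.
    rewrite <- E1. apply RInt_ext. intros. unfold scal; simpl; unfold mult; simpl; rewrite Rmult_1_l. f_equal; ring. }
  rewrite F1.
  assert (F2 : RInt g (-PI + a) (- PI) = RInt g (PI + a) PI).
  { assert (e1: 1*(-PI+a)+2*PI = PI+a) by ring. assert (e2: 1*-PI+2*PI = PI) by ring.
    rewrite e1, e2 in E2. rewrite <- E2. apply RInt_ext. intros. unfold scal; simpl; unfold mult; simpl; rewrite Rmult_1_l.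
    rewrite Rmult_1_l. symmetry; apply Hp. }
  rewrite <- C1, <- C2, F2, <- S.
  repeat change (plus ?x ?y) with (x + y). repeat change (opp ?x) with (- x). change (@eq R (- RInt g PI (PI + a) + (RInt g (- PI) PI + RInt g PI (PI + a))) (RInt g (- PI) PI)). ring.
Qed.
Lemma real_ind (P : R -> Prop) T : 0 <= T -> P 0 ->
 (forall c, 0 < c <= T -> (forall r, 0 <= r < c -> P r) -> P c) ->
 (forall c, 0 <= c < T -> P c -> exists eta, 0 < eta /\ forall h, 0 < h < eta -> P (c + h)) ->
 P T.
Proof.
  intros HT P0 Hcl Hst.
  set (E := fun s => 0 <= s <= T /\ forall r, 0 <= r <= s -> P r).
  assert (Eb : bound E). { exists T. intros s [Hs _]. lra. }
  assert (E0 : E 0). { split. lra. intros r Hr. replace r with 0 by lra. auto. }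
  destruct (completeness E Eb (ex_intro _ 0 E0)) as [m [Hub Hl]].
  assert (m0 : 0 <= m) by (apply Hub; auto).
  assert (mT : m <= T). { apply Hl. intros s [Hs _]. lra. }
  assert (Hm : forall r, 0 <= r < m -> P r).
  { intros r Hr. destruct (classic (is_upper_bound E r)) as [Hu|Hu].
    - specialize (Hl r Hu). lra.
    - apply not_all_ex_not in Hu. destruct Hu as [s Hs].
      apply imply_to_and in Hs. destruct Hs as [[Hs1 Hs2] Hs3].
      apply Hs2. lra. }
  assert (Pm : P m).
  { destruct (Req_dec m 0) as [->|Hm0]; auto. apply Hcl; auto. lra. }
  assert (Em : E m). { split. lra. intros r Hr. destruct (Req_dec r m) as [->|]; auto. apply Hm; lra. }
  destruct (Req_dec m T) as [<-|HmT]; auto.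
  destruct (Hst m ltac:(lra) Pm) as [eta [Heta Hh]].
  set (s := m + Rmin (eta/2) (T - m)).
  assert (Hmin1 : Rmin (eta/2) (T-m) <= eta/2) by apply Rmin_l.
  assert (Hmin2 : Rmin (eta/2) (T-m) <= T - m) by apply Rmin_r.
  assert (Hmin3 : 0 < Rmin (eta/2) (T-m)) by (apply Rmin_glb_lt; lra).
  assert (Es : E s).
  { split. unfold s; lra. intros r Hr. destruct (Rle_dec r m).
    - apply Em. lra.
    - replace r with (m + (r - m)) by ring. apply Hh. unfold s in Hr. lra. }
  specialize (Hub s Es). unfold s in Hub. lra.
Qed.

Lemma RIp (f g : R -> R) a b : (forall x, continuous f x) -> (forall x, continuous g x) ->
  RInt (fun x => f x + g x) a b = RInt f a b + RInt g a b.
Proof. intros. apply (RInt_plus f g); apply exR; auto. Qed.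
Lemma RIs (f : R -> R) k a b : (forall x, continuous f x) ->
  RInt (fun x => k * f x) a b = k * RInt f a b.
Proof. intros. apply (RInt_scal f); apply exR; auto. Qed.
Lemma RIm (f g : R -> R) a b : (forall x, continuous f x) -> (forall x, continuous g x) ->
  RInt (fun x => f x - g x) a b = RInt f a b - RInt g a b.
Proof. intros. apply (RInt_minus f g); apply exR; auto. Qed.
Lemma RIc (k a b : R) : RInt (fun _ => k) a b = (b - a) * k.
Proof. apply (RInt_const (V := R_CompleteNormedModule)). Qed.
Lemma RIle (f g : R -> R) a b : a <= b -> (forall x, continuous f x) -> (forall x, continuous g x) ->
  (forall x, f x <= g x) -> RInt f a b <= RInt g a b.
Proof. intros. apply RInt_le; auto; apply exR; auto. Qed.

Lemma pos_le a : 0 <= pospart a <= Rabs a.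
Proof. unfold pospart, Rmax, Rabs. destruct (Rle_dec 0 a); destruct (Rcase_abs a); lra. Qed.
Lemma neg_le a : 0 <= negpart a <= Rabs a.
Proof. unfold negpart, Rmax, Rabs. destruct (Rle_dec 0 (-a)); destruct (Rcase_abs a); lra. Qed.
Lemma posneg a : pospart a + negpart a = Rabs a.
Proof. rewrite pospart_eq, negpart_eq. field. Qed.

Lemma euler (f U : R -> R) (e h M : R) :
  (forall x, continuous f x) -> (forall x, continuous U x) ->
  periodic2pi f -> periodic2pi U -> (forall x, Rabs (U x) <= M) ->
  0 < e -> 0 <= h -> h * M <= e ->
  RInt (fun x => Rabs (f x + h * (/ e * (f (x - e) * pospart (U (x - e)) - f x * Rabs (U x)
      + f (x + e) * negpart (U (x + e)))))) (- PI) PI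
  <= RInt (fun x => Rabs (f x)) (- PI) PI.
Proof.
  intros Hf HU Pf PU HM He Hh HhM.
  set (q := h / e).
  assert (q0 : 0 <= q) by (unfold q; apply Rdiv_le_0_compat; lra).
  assert (q1 : forall x, q * Rabs (U x) <= 1).
  { intros x. unfold q. apply (Rmult_le_reg_l e); auto. field_simplify; [|lra].
    assert (h * Rabs (U x) <= h * M) by (apply Rmult_le_compat_l; auto). lra. }
  set (G1 := fun y => Rabs (f y) * pospart (U y)).
  set (G2 := fun y => Rabs (f y) * negpart (U y)).
  assert (cf : forall x, continuous (fun y => Rabs (f y)) x) by (intros; apply cabs; auto).
  assert (cG1 : forall x, continuous G1 x) by (intros; apply cmult; auto; apply cpos; auto).
  assert (cG2 : forall x, continuous G2 x) by (intros; apply cmult; auto; apply cneg; auto).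
  assert (cFU : forall x, continuous (fun y => Rabs (f y) * Rabs (U y)) x)
    by (intros; apply cmult; auto; apply cabs; auto).
  assert (cS1 : forall x, continuous (fun y => G1 (y + - e)) x) by (intros; apply cshift; auto).
  assert (cS2 : forall x, continuous (fun y => G2 (y + e)) x) by (intros; apply cshift; auto).
  apply Rle_trans with (RInt (fun x => (Rabs (f x) - q * (Rabs (f x) * Rabs (U x)))
      + (q * G1 (x + - e) + q * G2 (x + e))) (- PI) PI).
  - apply RIle.
    + assert (PI > 0) by apply PI_RGT_0. lra.
    + intros; apply cabs. apply cplus; auto. apply cmult; [apply cconst|].
      apply cmult; [apply cconst|]. apply cplus; [apply cminus|].
      * apply cmult. apply cshift with (a := - e). auto. apply cpos. apply cshift with (a := -e); auto.
      * apply cmult; auto. apply cabs; auto.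
      * apply cmult. apply cshift; auto. apply cneg. apply cshift; auto.
    + intros. apply cplus. apply cminus; auto. apply cmult; auto; apply cconst.
      apply cplus; apply cmult; auto; apply cconst.
    + intros x. unfold G1, G2.
      replace (x + - e) with (x - e) by ring.
      assert (E : f x + h * (/ e * (f (x - e) * pospart (U (x - e)) - f x * Rabs (U x)
        + f (x + e) * negpart (U (x + e))))
        = f x * (1 - q * Rabs (U x)) + (q * pospart (U (x - e))) * f (x - e)
          + (q * negpart (U (x + e))) * f (x + e)) by (unfold q; field; lra).
      rewrite E.
      destruct (pos_le (U (x - e))). destruct (neg_le (U (x + e))). specialize (q1 x).
      eapply Rle_trans. apply Rabs_triang. eapply Rle_trans. apply Rplus_le_compat_r. apply Rabs_triang.
      rewrite !Rabs_mult, (Rabs_right (1 - _)), (Rabs_right q), (Rabs_right (pospart _)), (Rabs_right (negpart _)); try lra.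
  - rewrite RIp; auto.
    2:{ intros; apply cminus; auto. apply cmult; auto; apply cconst. }
    2:{ intros; apply cplus; apply cmult; auto; apply cconst. }
    rewrite RIm; auto. 2:{ intros; apply cmult; auto; apply cconst. }
    rewrite RIp. 2,3: intros; apply cmult; auto; apply cconst.
    rewrite !RIs; auto.
    rewrite (shift_inv G1), (shift_inv G2); auto.
    2:{ intro y. unfold G2. rewrite PU, Pf. auto. }
    2:{ intro y. unfold G1. rewrite PU, Pf. auto. }
    assert (RInt G1 (-PI) PI + RInt G2 (-PI) PI = RInt (fun y => Rabs (f y) * Rabs (U y)) (-PI) PI).
    { rewrite <- RIp; auto. apply RInt_ext. intros. unfold G1, G2. rewrite <- (posneg (U x)), Rmult_plus_distr_l. reflexivity. }
    nra.
Qed.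

Lemma rhs_bound e U Xf x t B M : 0 < e -> (forall y, Rabs (Xf y t) <= B) ->
  (forall y, Rabs (U y t) <= M) -> Rabs (rhs e U Xf x t) <= 3 * B * M / e.
Proof.
  intros He HB HM. unfold rhs.
  assert (B0 : 0 <= B) by (eapply Rle_trans; [apply Rabs_pos| apply (HB x)]).
  assert (M0 : 0 <= M) by (eapply Rle_trans; [apply Rabs_pos| apply (HM x)]).
  assert (T1 : Rabs (Xf (x - e) t * pospart (U (x - e) t)) <= B * M).
  { rewrite Rabs_mult. destruct (pos_le (U (x - e) t)). rewrite (Rabs_right (pospart _)) by lra.
    apply Rmult_le_compat; auto using Rabs_pos. specialize (HM (x - e)). lra. }
  assert (T2 : Rabs (Xf x t * Rabs (U x t)) <= B * M).
  { rewrite Rabs_mult, Rabs_Rabsolu. apply Rmult_le_compat; auto using Rabs_pos. }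
  assert (T3 : Rabs (Xf (x + e) t * negpart (U (x + e) t)) <= B * M).
  { rewrite Rabs_mult. destruct (neg_le (U (x + e) t)). rewrite (Rabs_right (negpart _)) by lra.
    apply Rmult_le_compat; auto using Rabs_pos. specialize (HM (x + e)). lra. }
  rewrite Rabs_mult, Rabs_right by (apply Rle_ge; left; apply Rinv_0_lt_compat; auto).
  unfold Rdiv. rewrite (Rmult_comm _ (/ e)).
  apply Rmult_le_compat_l. left; apply Rinv_0_lt_compat; auto.
  eapply Rle_trans. apply Rabs_triang.
  assert (Rabs (Xf (x - e) t * pospart (U (x - e) t) - Xf x t * Rabs (U x t)) <= 2 * B * M).
  { eapply Rle_trans. apply Rabs_triang. rewrite Rabs_Ropp. lra. }
  lra.
Qed.

Lemma dsplit A h D d : h <> 0 -> Rabs (A / h - D) <= d -> Rabs (A - h * D) <= Rabs h * d.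
Proof. intros. replace (A - h * D) with (h * (A / h - D)) by (field; auto).
  rewrite Rabs_mult. apply Rmult_le_compat_l; auto using Rabs_pos. Qed.

Lemma le_eps a b K t0 : 0 < t0 -> 0 <= K -> (forall t, 0 < t < t0 -> a <= b + K * t) -> a <= b.
Proof.
  intros Ht0 HK H. destruct (Rle_dec a b) as [|Hn]; auto. exfalso.
  set (t := Rmin (t0 / 2) ((a - b) / (2 * (K + 1)))).
  assert (t1 : t <= t0/2) by apply Rmin_l.
  assert (t2 : t <= (a - b) / (2 * (K + 1))) by apply Rmin_r.
  assert (t3 : 0 < t). { apply Rmin_glb_lt. lra. apply Rdiv_lt_0_compat; lra. }
  specialize (H t ltac:(lra)).
  assert (K * t <= (a - b) / 2).
  { apply Rle_trans with ((K + 1) * t). nra.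
    apply Rle_trans with ((K+1) * ((a - b) / (2 * (K + 1)))). apply Rmult_le_compat_l; lra.
    right. field. lra. }
  lra.
Qed.

Lemma time_lip e U v Xf M : 0 < e -> (forall x t, 0 <= t -> Rabs (U x t) <= M) ->
  is_C1_solution e U v Xf -> forall c, 0 <= c -> exists K eta, 0 < eta /\ 0 <= K /\
  forall s, 0 <= s -> Rabs (s - c) < eta -> forall x, Rabs (Xf x s - Xf x c) <= K * Rabs (s - c).
Proof.
  intros He HM [HCb [Hd [_ _]]] c Hc.
  destruct (HCb c Hc) as [_ [B HB]].
  assert (B0 : 0 <= B) by (eapply Rle_trans; [apply Rabs_pos| apply (HB 0)]).
  assert (M0 : 0 <= M) by (eapply Rle_trans; [apply Rabs_pos| apply (HM 0 c Hc)]).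
  destruct (Hd c Hc 1 Rlt_0_1) as [eta [Heta Hh]].
  exists (1 + 3 * B * M / e), eta. split; auto. split.
  { assert (0 <= 3 * B * M / e) by (apply Rdiv_le_0_compat; [|lra]; nra). lra. }
  intros s Hs Hsc x.
  destruct (Req_dec s c) as [->|Hne].
  { rewrite !Rminus_diag, !Rabs_R0. lra. }
  assert (hne : s - c <> 0) by lra.
  specialize (Hh (s - c) hne Hsc ltac:(lra) x). replace (c + (s - c)) with s in Hh by ring.
  apply dsplit in Hh; auto.
  assert (Hr := rhs_bound e U Xf x c B M He HB (fun y => HM y c Hc)).
  assert (Rabs ((s - c) * rhs e U Xf x c) <= Rabs (s - c) * (3 * B * M / e)).
  { rewrite Rabs_mult. apply Rmult_le_compat_l; auto using Rabs_pos. }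
  assert (Rabs (Xf x s - Xf x c) <= Rabs (Xf x s - Xf x c - (s - c) * rhs e U Xf x c) + Rabs ((s - c) * rhs e U Xf x c)).
  { eapply Rle_trans; [|apply Rabs_triang]. right; f_equal; ring. }
  nra.
Qed.

Lemma rhs_diff e U Xf x c : e <> 0 -> periodic2pi (fun y => U y c) ->
  rhs e U Xf (x + 2 * PI) c - rhs e U Xf x c = rhs e U (fun y s => Xf (y + 2 * PI) s - Xf y s) x c.
Proof.
  intros He Hp. unfold periodic2pi in Hp. unfold rhs.
  replace (x + 2 * PI - e) with (x - e + 2 * PI) by ring.
  replace (x + 2 * PI + e) with (x + e + 2 * PI) by ring.
  rewrite !Hp. field. auto.
Qed.

Lemma tri4 p q p' q' : Rabs (p - q) <= Rabs (p' - q') + Rabs (p' - p) + Rabs (q' - q).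
Proof. unfold Rabs; repeat destruct Rcase_abs; lra. Qed.

Lemma X_per e U v Xf M : 0 < e -> 0 < M -> (forall t, 0 <= t -> periodic2pi (fun x => U x t)) ->
  (forall x t, 0 <= t -> Rabs (U x t) <= M) -> periodic2pi v -> is_C1_solution e U v Xf ->
  forall T, 0 <= T -> forall x, Xf (x + 2 * PI) T = Xf x T.
Proof.
  intros He HM HUp HUb Hv HX T HT.
  assert (HX' := HX). destruct HX' as [HCb [Hd [_ H0]]].
  set (Yf := fun y s => Xf (y + 2 * PI) s - Xf y s).
  set (L := 3 * M / e).
  assert (L0 : 0 < L) by (unfold L; apply Rdiv_lt_0_compat; lra).
  assert (Hb : forall d, 0 < d -> forall x, Rabs (Yf x T) <= d * T * exp (L * T)).
  { intros d Hdp.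
    apply (real_ind (fun r => forall x, Rabs (Yf x r) <= d * r * exp (L * r)) T); auto.
    - intros x. unfold Yf. rewrite !H0, Hv, Rminus_diag, Rabs_R0. right; ring.
    - intros c Hc HP x.
      destruct (time_lip e U v Xf M He (fun x t Ht => HUb x t Ht) HX c ltac:(lra)) as [K [eta [Heta [HK Hl]]]].
      apply (le_eps _ _ (2 * K) (Rmin eta c)).
      { apply Rmin_glb_lt; lra. } { lra. }
      intros tau Htau.
      assert (tau1 : tau < eta) by (eapply Rlt_le_trans; [apply Htau| apply Rmin_l]).
      assert (tau2 : tau < c) by (eapply Rlt_le_trans; [apply Htau| apply Rmin_r]).
      set (r := c - tau).
      assert (Hr : 0 <= r < c) by (unfold r; lra).
      specialize (HP r Hr x).
      assert (E1 : Rabs (r - c) < eta) by (unfold r; rewrite Rabs_left; lra).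
      assert (A1 := Hl r ltac:(lra) E1 (x + 2 * PI)).
      assert (A2 := Hl r ltac:(lra) E1 x).
      assert (Rabs (r - c) = tau) by (unfold r; rewrite Rabs_left; lra).
      assert (Mo : d * r * exp (L * r) <= d * c * exp (L * c)).
      { assert (exp (L * r) <= exp (L * c)).
        { destruct (Req_dec r c) as [Hrc|Hrc]. rewrite Hrc; lra. left; apply exp_increasing. nra. }
        assert (0 < exp (L * r)) by apply exp_pos.
        apply Rmult_le_compat; try nra. }
      unfold Yf in *.
      assert (Rabs (Xf (x + 2 * PI) c - Xf x c) <= Rabs (Xf (x + 2 * PI) r - Xf x r)
         + Rabs (Xf (x + 2 * PI) r - Xf (x + 2 * PI) c) + Rabs (Xf x r - Xf x c)).
      { apply tri4. }
      nra.
    - intros c Hc Pc.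
      destruct (Hd c ltac:(lra) (d / 2) ltac:(lra)) as [eta [Heta Hh]].
      exists eta. split; auto. intros h Hh0 x.
      assert (hne : h <> 0) by lra.
      assert (ha : Rabs h < eta) by (rewrite Rabs_right; lra).
      assert (A1 := dsplit _ _ _ _ hne (Hh h hne ha ltac:(lra) (x + 2 * PI))).
      assert (A2 := dsplit _ _ _ _ hne (Hh h hne ha ltac:(lra) x)).
      rewrite (Rabs_right h) in A1, A2 by lra.
      assert (RD := rhs_diff e U Xf x c ltac:(lra) (HUp c ltac:(lra))).
      assert (RB := rhs_bound e U Yf x c (d * c * exp (L * c)) M He Pc (fun y => HUb y c ltac:(lra))).
      fold Yf in RD. rewrite <- RD in RB.
      set (phi := d * c * exp (L * c)) in *.
      assert (RB' : Rabs (h * (rhs e U Xf (x + 2 * PI) c - rhs e U Xf x c)) <= h * (L * phi)).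
      { rewrite Rabs_mult, Rabs_right by lra. apply Rmult_le_compat_l. lra.
        unfold L. replace (3 * M / e * phi) with (3 * phi * M / e) by (field; lra). auto. }
      assert (Y1 : Rabs (Yf x (c + h)) <= Rabs (Yf x c) + h * (L * phi) + h * d).
      { unfold Yf.
        set (a1 := Xf (x + 2 * PI) (c + h) - Xf (x + 2 * PI) c - h * rhs e U Xf (x + 2 * PI) c) in *.
        set (a2 := Xf x (c + h) - Xf x c - h * rhs e U Xf x c) in *.
        replace (Xf (x + 2 * PI) (c + h) - Xf x (c + h)) with
          ((Xf (x + 2 * PI) c - Xf x c) + h * (rhs e U Xf (x + 2 * PI) c - rhs e U Xf x c) + (a1 - a2))
          by (unfold a1, a2; ring).
        eapply Rle_trans. apply Rabs_triang.
        eapply Rle_trans. apply Rplus_le_compat_r. apply Rabs_triang.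
        assert (Rabs (a1 - a2) <= h * (d / 2) + h * (d / 2)).
        { unfold Rminus at 1. eapply Rle_trans. apply Rabs_triang. rewrite Rabs_Ropp. lra. }
        lra. }
      specialize (Pc x).
      assert (Ec : 1 <= exp (L * c)).
      { rewrite <- exp_0. destruct (Req_dec c 0). subst. rewrite Rmult_0_r. lra.
        left; apply exp_increasing. nra. }
      assert (Eh : 1 + L * h < exp (L * h)) by (apply exp_ineq1; nra).
      assert (Ep : exp (L * (c + h)) = exp (L * c) * exp (L * h)) by (rewrite <- exp_plus; f_equal; ring).
      rewrite Ep.
      assert (phi0 : 0 <= phi) by (unfold phi; apply Rmult_le_pos; [nra| apply Rlt_le, exp_pos]).
      assert (K1 : d * (c + h) * (exp (L * c) * (1 + L * h)) <= d * (c + h) * (exp (L * c) * exp (L * h))).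
      { apply Rmult_le_compat_l. nra. apply Rmult_le_compat_l. lra. lra. }
      assert (K2 : d * (c + h) * (exp (L * c) * (1 + L * h)) = phi * (1 + L * h) + d * h * exp (L * c) * (1 + L * h))
        by (unfold phi; ring).
      assert (K3 : d * h <= d * h * exp (L * c) * (1 + L * h)).
      { assert (Lh : 0 < L * h) by (apply Rmult_lt_0_compat; lra).
        assert (1 <= exp (L * c) * (1 + L * h)).
        { apply Rle_trans with (1 * (1 + L * h)). lra. apply Rmult_le_compat_r; lra. }
        assert (0 < d * h) by (apply Rmult_lt_0_compat; lra).
        replace (d * h * exp (L * c) * (1 + L * h)) with ((d * h) * (exp (L * c) * (1 + L * h))) by ring.
        apply Rle_trans with (d * h * 1). lra. apply Rmult_le_compat_l; lra. }
      nra. }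
  intros x.
  assert (Z : Rabs (Yf x T) <= 0).
  { apply (le_eps _ 0 (T * exp (L * T)) 1). lra.
    { apply Rmult_le_pos; auto. apply Rlt_le, exp_pos. }
    intros t Ht. specialize (Hb t ltac:(lra) x). nra. }
  assert (Yf x T = 0). { destruct (Rabs_pos (Yf x T)). lra. apply Rabs_eq_0; lra. }
  unfold Yf in H. lra.
Qed.

Lemma cont_rhs (e : R) (U Xf : R -> R -> R) (c : R) : (forall y, continuous (fun x => Xf x c) y) ->
  (forall y, continuous (fun x => U x c) y) -> forall y, continuous (fun x => rhs e U Xf x c) y.
Proof.
  intros HX HU y. unfold rhs. apply cmult; [apply cconst|].
  apply cplus; [apply cminus|].
  - apply cmult. apply (cshift (fun z => Xf z c) (- e)). auto.
    apply (cpos (fun x => U (x + - e) c)). apply (cshift (fun z => U z c) (- e)); auto.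
  - apply cmult; auto. apply cabs; auto.
  - apply cmult. apply (cshift (fun z => Xf z c)); auto. apply (cneg (fun x => U (x + e) c)).
    apply (cshift (fun z => U z c)); auto.
Qed.

Lemma abs_tri3 a b : Rabs a <= Rabs b + Rabs (a - b).
Proof. unfold Rabs; repeat destruct Rcase_abs; lra. Qed.

Lemma contraction e U v Xf M : 0 < e -> 0 < M -> (forall t, 0 <= t -> periodic2pi (fun x => U x t)) ->
  (forall t, 0 <= t -> in_Cb (fun x => U x t)) ->
  (forall x t, 0 <= t -> Rabs (U x t) <= M) -> periodic2pi v -> is_C1_solution e U v Xf ->
  forall T, 0 <= T -> RInt (fun x => Rabs (Xf x T)) (- PI) PI <= RInt (fun x => Rabs (Xf x 0)) (- PI) PI.
Proof.
  intros He HM HUp HUc HUb Hv HX T HT.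
  assert (HX' := HX). destruct HX' as [HCb [Hd [_ H0]]].
  assert (PI0 : 0 < PI) by apply PI_RGT_0.
  set (N := fun r => RInt (fun x => Rabs (Xf x r)) (- PI) PI).
  assert (cX : forall r, 0 <= r -> forall y, continuous (fun x => Xf x r) y) by (intros r Hr; apply (HCb r Hr)).
  assert (cU : forall r, 0 <= r -> forall y, continuous (fun x => U x r) y) by (intros r Hr; apply (HUc r Hr)).
  assert (cA : forall r, 0 <= r -> forall y, continuous (fun x => Rabs (Xf x r)) y) by (intros; apply cabs; auto).
  assert (Hb : forall d, 0 < d -> N T <= N 0 + d * T).
  { intros d Hdp.
    apply (real_ind (fun r => N r <= N 0 + d * r) T); auto.
    - lra.
    - intros c Hc HP.
      destruct (time_lip e U v Xf M He HUb HX c ltac:(lra)) as [K [eta [Heta [HK Hl]]]].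
      apply (le_eps _ _ (2 * PI * K) (Rmin eta c)).
      { apply Rmin_glb_lt; lra. } { apply Rmult_le_pos; lra. }
      intros tau Htau.
      assert (tau1 : tau < eta) by (eapply Rlt_le_trans; [apply Htau| apply Rmin_l]).
      assert (tau2 : tau < c) by (eapply Rlt_le_trans; [apply Htau| apply Rmin_r]).
      set (r := c - tau).
      assert (Hr : 0 <= r < c) by (unfold r; lra).
      specialize (HP r Hr).
      assert (E1 : Rabs (r - c) < eta) by (unfold r; rewrite Rabs_left; lra).
      assert (E2 : Rabs (r - c) = tau) by (unfold r; rewrite Rabs_left; lra).
      assert (N c <= RInt (fun x => Rabs (Xf x r) + K * tau) (- PI) PI).
      { apply RIle. lra. apply cA; lra. intros; apply cplus. apply cA; lra. apply cconst.
        intros x. specialize (Hl r ltac:(lra) E1 x). rewrite E2 in Hl.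
        assert (Tr := abs_tri3 (Xf x c) (Xf x r)). rewrite <- (Rabs_Ropp (Xf x c - Xf x r)) in Tr.
        replace (- (Xf x c - Xf x r)) with (Xf x r - Xf x c) in Tr by ring. lra. }
      rewrite RIp, RIc in H. 2: apply cA; lra. 2: intros; apply cconst.
      fold (N r) in H. unfold r in H, HP. assert (0 <= d * tau) by (apply Rmult_le_pos; lra). replace ((PI - - PI) * (K * tau)) with (2*PI*K*tau) in H by ring. lra.
    - intros c Hc Pc.
      destruct (Hd c ltac:(lra) (d / (2 * PI)) ltac:(apply Rdiv_lt_0_compat; lra)) as [eta [Heta Hh]].
      exists (Rmin eta (e / M)). split. { apply Rmin_glb_lt; auto. apply Rdiv_lt_0_compat; lra. }
      intros h Hh0.
      assert (h1 : h < eta) by (eapply Rlt_le_trans; [apply Hh0| apply Rmin_l]).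
      assert (h2 : h < e / M) by (eapply Rlt_le_trans; [apply Hh0| apply Rmin_r]).
      assert (hne : h <> 0) by lra.
      assert (ha : Rabs h < eta) by (rewrite Rabs_right; lra).
      assert (cR := cont_rhs e U Xf c (cX c ltac:(lra)) (cU c ltac:(lra))).
      assert (S1 : N (c + h) <= RInt (fun x => Rabs (Xf x c + h * rhs e U Xf x c) + h * (d / (2 * PI))) (- PI) PI).
      { apply RIle. lra. apply cA; lra.
        intros; apply cplus; [|apply cconst]. apply cabs. apply cplus. apply cX; lra. apply cmult; auto; apply cconst.
        intros x. assert (A := dsplit _ _ _ _ hne (Hh h hne ha ltac:(lra) x)).
        rewrite (Rabs_right h) in A by lra.
        assert (Tr := abs_tri3 (Xf x (c + h)) (Xf x c + h * rhs e U Xf x c)).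
        replace (Xf x (c + h) - (Xf x c + h * rhs e U Xf x c)) with (Xf x (c + h) - Xf x c - h * rhs e U Xf x c) in Tr by ring.
        lra. }
      rewrite RIp, RIc in S1. 3: intros; apply cconst.
      2:{ intros; apply cabs. apply cplus. apply cX; lra. apply cmult; auto; apply cconst. }
      assert (S2 : RInt (fun x => Rabs (Xf x c + h * rhs e U Xf x c)) (- PI) PI <= N c).
      { unfold rhs. apply (euler (fun x => Xf x c) (fun x => U x c) e h M).
        - apply cX; lra.
        - apply cU; lra.
        - intros x. apply (X_per e U v Xf M); auto. lra.
        - apply HUp; lra.
        - intros; apply HUb; lra.
        - auto.
        - lra.
        - apply Rlt_le. apply (Rmult_lt_reg_r (/ M)). apply Rinv_0_lt_compat; lra.
          replace (h * M * / M) with h by (field; lra). auto. }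
      assert (S3 : (PI - - PI) * (h * (d / (2 * PI))) = h * d) by (field; lra).
      lra. }
  apply (le_eps _ _ T 1). lra. auto. intros t Ht. specialize (Hb t ltac:(lra)). fold N. rewrite Rmult_comm; exact Hb.
Qed.

Theorem lemma1
  (u : R -> R -> R -> R) (v0 : R -> R -> R) (X : R -> R -> R -> R) (M1 : R)
  (Hu_per : forall eps, 0 < eps < 1 -> forall t, 0 <= t ->
     periodic2pi (fun x => u eps x t))
  (Hu_Cb : forall eps, 0 < eps < 1 -> forall t, 0 <= t ->
     in_Cb (fun x => u eps x t))
  (Hu_cont : forall eps, 0 < eps < 1 -> sup_continuous (u eps))
  (HM1 : 0 < M1)
  (Hu_bd : forall eps, 0 < eps < 1 -> forall x t, 0 <= t ->
     Rabs (u eps x t) <= M1)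
  (Hv0_Cb : forall eps, 0 < eps < 1 -> in_Cb (v0 eps))
  (Hv0_per : forall eps, 0 < eps < 1 -> periodic2pi (v0 eps))
  (Hv0_L1 : exists K, forall eps, 0 < eps < 1 ->
     RInt (fun x => Rabs (v0 eps x)) (- PI) PI <= K)
  (HX : forall eps, 0 < eps < 1 -> is_C1_solution eps (u eps) (v0 eps) (X eps)) :
  exists C, 0 < C /\
    forall eps, 0 < eps < 1 -> forall t, 0 <= t ->
      RInt (fun x => Rabs (X eps x t)) (- PI) PI
        <= RInt (fun x => Rabs (v0 eps x)) (- PI) PI
      /\ RInt (fun x => Rabs (v0 eps x)) (- PI) PI <= C.
Proof.
  destruct Hv0_L1 as [K HK].
  exists (Rmax K 1). split. { apply Rlt_le_trans with 1. lra. apply Rmax_r. }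
  intros eps Heps t Ht. split.
  - assert (H := contraction eps (u eps) (v0 eps) (X eps) M1 ltac:(lra) HM1
      (Hu_per eps Heps) (Hu_Cb eps Heps) (Hu_bd eps Heps) (Hv0_per eps Heps) (HX eps Heps) t Ht).
    destruct (HX eps Heps) as [_ [_ [_ H0]]].
    rewrite (RInt_ext (fun x => Rabs (X eps x 0)) (fun x => Rabs (v0 eps x))) in H; auto.
    intros. rewrite H0. reflexivity.
  - eapply Rle_trans. apply (HK eps Heps). apply Rmax_l.
Qed.
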